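(* Let $\Omega_n=\{1,2,\dots,n\}$, let $C_2,C_3,\dots,C_n$ be positive numbers, and let $\mu:2^{\Omega_n}\to[0,+\infty)$ satisfy \[ \mu(A)\leqslant\frac{1}{|A|}\sum_{k\in A}\mu(\{k\})+\frac{C_{|A|}}{|A|}\sum_{k\in A}\mu(\{k\})\,\mu(A\setminus\{k\}) \] for all $A\subset\Omega_n$ with $|A|\geqslant2$. Then for every nonempty $A\subset\Omega_n$, \[ \mu(A)\leqslant\frac{1}{|A|}\sum_{k\in A}\mu(\{k\})+\sum_{k=2}^{|A|}C_{|A|}C_{|A|-1}\cdots C_{|A|-k+2}\left(\frac{1}{|A|}\sum_{j\in A}\mu(\{j\})\right)^k. \] *)

(* Defs.v *)
From mathcomp Require Import all_boot all_order all_algebra.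
Set Implicit Arguments. Unset Strict Implicit. Unset Printing Implicit Defensive.

(* Main.v *)
Require Import Defs.
From mathcomp Require Import all_boot all_order all_algebra.
From mathcomp Require Import ring lra zify.
Import Order.TTheory GRing.Theory Num.Theory.
Local Open Scope ring_scope.

Lemma D_ge0 (R : realFieldType) (a b : R) (j : nat) : 0 <= a -> 0 <= b ->
  0 <= a ^+ j.+1 - j.+1%:R * a * b ^+ j + j%:R * b ^+ j.+1.
Proof.
move=> ha hb; elim: j => [|j IH].
  by rewrite expr1 expr0 mulr1 mul0r addr0 mul1r subrr.
have -> : a ^+ j.+2 - j.+2%:R * a * b ^+ j.+1 + j.+1%:R * b ^+ j.+2
  = a * (a ^+ j.+1 - j.+1%:R * a * b ^+ j + j%:R * b ^+ j.+1)
    + j.+1%:R * b ^+ j * (a - b) ^+ 2.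
  rewrite !exprS -!natr1; ring.
apply: addr_ge0; first exact: mulr_ge0.
apply: mulr_ge0; last exact: sqr_ge0.
by apply: mulr_ge0; [exact: ler0n | exact: exprn_ge0].
Qed.

Lemma XX_ge0 (R : realFieldType) (a b : R) (j : nat) : 0 <= a -> 0 <= b ->
  0 <= (a - b) * (a ^+ j - b ^+ j).
Proof.
move=> ha hb; rewrite subrXX mulrA -expr2 mulr_ge0 ?sqr_ge0 //.
by apply: sumr_ge0 => i _; rewrite mulr_ge0 ?exprn_ge0.
Qed.

Lemma pointwise (R : realFieldType) (a b : R) (p j : nat) : 0 <= a -> 0 <= b ->
  (j <= p)%N ->
  (p.+1%:R * a - p%:R * b) * b ^+ j <= a ^+ j.+1 + a ^+ j * (p - j)%:R * (a - b).
Proof.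
move=> ha hb hjp; rewrite -subr_ge0.
have -> : a ^+ j.+1 + a ^+ j * (p - j)%:R * (a - b) - (p.+1%:R * a - p%:R * b) * b ^+ j
  = (a ^+ j.+1 - j.+1%:R * a * b ^+ j + j%:R * b ^+ j.+1)
    + (p - j)%:R * ((a - b) * (a ^+ j - b ^+ j)).
  rewrite natrB // !exprS -!natr1; ring.
by rewrite addr_ge0 ?D_ge0 // mulr_ge0 ?ler0n ?XX_ge0.
Qed.

Lemma keysum (R : realFieldType) (I : finType) (A : {set I}) (y b : I -> R) (a : R) (p j : nat) :
  #|A| = p.+1 -> (j <= p)%N -> 0 <= a ->
  (forall k, k \in A -> 0 <= b k /\ y k = p.+1%:R * a - p%:R * b k) ->
  \sum_(k in A) b k = p.+1%:R * a ->
  \sum_(k in A) y k * b k ^+ j <= p.+1%:R * a ^+ j.+1.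
Proof.
move=> hA hj ha hyb hsum.
apply: (le_trans (y := \sum_(k in A) (a ^+ j.+1 + a ^+ j * (p - j)%:R * (a - b k)))).
  apply: ler_sum => k kA; have [hb ->] := hyb k kA; exact: pointwise.
rewrite big_split /= -mulr_sumr sumrB hsum !sumr_const hA.
by rewrite -[a ^+ j.+1 *+ _]mulr_natl -[a *+ _]mulr_natl subrr mulr0 addr0.
Qed.
Definition G (R : realFieldType) (C : nat -> R) (m : nat) (t : R) :=
  \sum_(2 <= k < m.+1) (\prod_(i < k.-1) C (m - i)%N) * t ^+ k.

Arguments G {R}.

Lemma G1 (R : realFieldType) (C : nat -> R) t : G C 1 t = 0.
Proof. by rewrite /G big_geq. Qed.

Lemma Grec (R : realFieldType) (C : nat -> R) m t :
  G C m.+2 t = C m.+2 * t * (t + G C m.+1 t).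
Proof.
rewrite /G big_ltn // big_ord1 subn0 big_add1 /= mulrDr mulr_sumr; congr (_ + _).
  by rewrite -mulrA -expr2.
apply: eq_big_nat => k /andP [hk _].
case: k hk => // k hk /=; rewrite big_ord_recl /= subn0.
rewrite (exprS _ k.+1).
rewrite (eq_bigr (fun i : 'I_k => C (m.+1 - i)%N)); last first.
  by move=> i _; rewrite /bump /= add1n subSS.
ring.
Qed.

Theorem proposition1 (R : realFieldType) (n : nat) (C : nat -> R)
  (mu : {set 'I_n} -> R)
  (hC : forall i : nat, (2 <= i <= n)%N -> 0 < C i)
  (hmu : forall A : {set 'I_n}, 0 <= mu A)
  (hrec : forall A : {set 'I_n}, (2 <= #|A|)%N ->
     mu A <= (#|A|%:R)^-1 * \sum_(k in A) mu [set k]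
             + C #|A| / #|A|%:R * \sum_(k in A) mu [set k] * mu (A :\ k)) :
  forall A : {set 'I_n}, A != set0 ->
    mu A <= (#|A|%:R)^-1 * \sum_(k in A) mu [set k]
            + \sum_(2 <= k < #|A|.+1)
                (\prod_(i < k.-1) C (#|A| - i)%N)
                * ((#|A|%:R)^-1 * \sum_(j in A) mu [set j]) ^+ k.
Proof.
suff main : forall m (A : {set 'I_n}), #|A| = m.+1 ->
  mu A <= (#|A|%:R)^-1 * \sum_(k in A) mu [set k]
          + G C #|A| ((#|A|%:R)^-1 * \sum_(k in A) mu [set k]).
  move=> A hA0; have : (0 < #|A|)%N by rewrite card_gt0.
  case hA: #|A| => [|m] // _; have := main m A hA; by rewrite hA.
elim=> [|m IH] A hA.
  have [x ->] : exists x, A = [set x] by apply/cards1P/eqP.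
  by rewrite cards1 G1 addr0 big_set1 -[1%:R]/1 invr1 mul1r.
have hn : (m.+2 <= n)%N by rewrite -hA -[X in (_ <= X)%N]card_ord max_card.
have hCp : 0 < C m.+2 by apply: hC; rewrite hn.
have hr := hrec A; rewrite hA in hr; have {}hr := hr isT.
rewrite hA; move: hr.
set s := \sum_(k in A) mu [set k].
set a := (m.+2%:R)^-1 * s.
set ak := fun k => (m.+1%:R)^-1 * \sum_(j in A :\ k) mu [set j].
have hs0 : 0 <= s by apply: sumr_ge0.
have ha0 : 0 <= a by rewrite mulr_ge0 // invr_ge0 ler0n.
have hsa : m.+2%:R * a = s by rewrite /a mulrA mulfV ?mul1r // pnatr_eq0.
have sk : forall k, k \in A -> \sum_(j in A :\ k) mu [set j] = s - mu [set k].
  by move=> k kA; rewrite /s (big_setD1 _ kA) /= addrAC subrr add0r.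
have hak : forall k, k \in A -> m.+1%:R * ak k = s - mu [set k].
  by move=> k kA; rewrite /ak sk // mulrA mulfV ?mul1r // pnatr_eq0.
have ak0 : forall k, 0 <= ak k.
  by move=> k; rewrite /ak mulr_ge0 ?invr_ge0 ?ler0n // sumr_ge0.
have IHk : forall k, k \in A -> mu (A :\ k) <= ak k + G C m.+1 (ak k).
  move=> k kA; have hc : #|A :\ k| = m.+1.
    by move: (cardsD1 k A); rewrite kA hA add1n => -[].
  by have := IH _ hc; rewrite hc.
have hyp : forall k, k \in A -> 0 <= ak k /\ mu [set k] = m.+2%:R * a - m.+1%:R * ak k.
  by move=> k kA; split => //; rewrite hsa hak // opprB addrC subrK.
have hsum : \sum_(k in A) ak k = m.+2%:R * a.
  rewrite /ak -mulr_sumr (eq_bigr (fun k => s - mu [set k])); last by move=> k kA; rewrite sk.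
  rewrite sumrB sumr_const hA -/s hsa -[s *+ _]mulr_natl -{2}(mul1r s) -mulrBl.
  have -> : m.+2%:R - 1 = m.+1%:R :> R by rewrite -natr1 addrK.
  by rewrite mulrA mulVf ?mul1r // pnatr_eq0.
have key : forall j, (j <= m.+1)%N ->
    \sum_(k in A) mu [set k] * ak k ^+ j <= m.+2%:R * a ^+ j.+1.
  by move=> j hj; apply: (@keysum R _ A (fun k => mu [set k]) ak a m.+1 j).
have step : \sum_(k in A) mu [set k] * mu (A :\ k) <= m.+2%:R * a * (a + G C m.+1 a).
  apply: (le_trans (y := \sum_(k in A) mu [set k] * (ak k + G C m.+1 (ak k)))).
    by apply: ler_sum => k kA; apply: ler_wpM2l => //; exact: IHk.
  rewrite /G.
  under eq_bigr do rewrite mulrDr mulr_sumr.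
  rewrite big_split /= exchange_big /= mulrDr mulr_sumr.
  apply: lerD.
    by have := key 1%N isT; rewrite -mulrA -expr2.
  apply: ler_sum_nat => j /andP[hj1 hj2].
  set T := \prod_(_ < _) _.
  have T0 : 0 <= T.
    apply: prodr_ge0 => i _; apply: ltW; apply: hC.
    have := ltn_ord i; lia.
  rewrite (eq_bigr (fun k => T * (mu [set k] * ak k ^+ j))); last first.
    by move=> k _; rewrite mulrCA.
  rewrite -mulr_sumr.
  apply: le_trans (ler_wpM2l T0 (key j _)) _; first lia.
  by rewrite le_eqVlt; apply/orP; left; apply/eqP; rewrite exprS; ring.
move=> hr; apply: le_trans hr _; rewrite lerD2l Grec.
have hc0 : 0 <= C m.+2 / m.+2%:R by rewrite divr_ge0 ?ler0n // ltW.
apply: le_trans (ler_wpM2l hc0 step) _.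
rewrite le_eqVlt; apply/orP; left; apply/eqP.
by rewrite -!mulrA mulKf ?pnatr_eq0.
Qed.
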